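(* In the modified market (with virtual buyers) described in the context, let $x^*\in\mathbb R^N_+$ be defined recursively, processing buyers in decreasing order of valuation with ties broken by index, by $$x^*_i=\min\Bigl(\frac{B_i}{v_i},\ \min_{H\subseteq H_i}\{f(E_{H\cup\{i\}})-x^*(H)\}\Bigr)\qquad(i\in N).$$ Then $x^*$ is an optimal allocation for liquid welfare: there is $w^*\in P$ with $w^*(E_i)=x^*_i$ for all $i\in N$, and $\sum_{i\in N}\min(v_ix^*_i,B_i)=\max_{w\in P}\sum_{i\in N}\min(v_iw(E_i),B_i)$. Moreover $x^*(N)=f(E_N)$.
   Context: Market model. Buyers $N_0=\{1,\dots,n\}$, sellers $M=\{1,\dots,m\}$, bipartite edge set $E_0\subseteq N_0\times M$; edge $(i,j)$ written $ij$; for a set $S$ of participants $E_S$ is the set of edges incident to a member of $S$; for a vector $w$ and a set $F$, $w(F)=\sum_{e\in F}w_e$. Each seller $j$ has a monotone submodular $f_j:2^{E_j}\to\mathbb R_+$ with $f_j(\emptyset)=0$ ($f_j(E_j)$ is her total amount of a homogeneous divisible good). Buyer $i$ has per-unit valuation $v_i>0$ and budget $B_i\ge0$; seller $j$ has per-unit valuation $\rho_j>0$. Modified market. For each seller $j$ add a virtual buyer $n+j$ adjacent only to $j$, with $v_{n+j}=\rho_j$ and $B_{n+j}=\infty$ (so $B_{n+j}/v_{n+j}=\infty$). Let $N=\{1,\dots,n+m\}$, $E=E_0\cup\{(n+j)j:j\in M\}$, and extend $f_j$ to subsets $F$ of $E_j$ (now including the edge $(n+j)j$) by $f_j(F)=f_j(E_j)$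 if $(n+j)j\in F$ and $f_j(F)$ unchanged otherwise. Let $P=\{w\in\mathbb R^E_+: w|_{E_j}\in P_j\ \forall j\}$ where $P_j=\{y\in\mathbb R^{E_j}_+: y(F)\le f_j(F)\ \forall F\subseteq E_j\}$, and $f(S)=\sum_{j\in M}f_j(S\cap E_j)$ for $S\subseteq E$. For $i\in N$, $H_i$ is the set of buyers $k\in N$ with $v_k>v_i$, or with $v_k=v_i$ and $k<i$. *)

(* Defs.v *)
From HB Require Import structures.
From mathcomp Require Import all_boot all_order all_algebra.
Set Implicit Arguments. Unset Strict Implicit. Unset Printing Implicit Defensive.
Import Order.TTheory GRing.Theory Num.Theory.
Local Open Scope ring_scope.

Section Market.
Variable R : realFieldType.
Variables n m : nat.
Variable E0 : {set 'I_n * 'I_m}.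
Variable f : 'I_m -> {set 'I_n * 'I_m} -> R.
Variable v : 'I_n -> R.
Variable B : 'I_n -> R.
Variable rho : 'I_m -> R.

Definition E0j (j : 'I_m) : {set 'I_n * 'I_m} := [set e in E0 | e.2 == j].

(* Modified market: buyers N = 'I_(n+m); buyer lshift m i is original buyer i,
   buyer rshift n j is the virtual buyer n+j of seller j. *)
Definition Edge := ('I_(n + m) * 'I_m)%type.
Definition lift0 (e : 'I_n * 'I_m) : Edge := (lshift m e.1, e.2).
Definition vedge (j : 'I_m) : Edge := (rshift n j, j).

Definition Em : {set Edge} := (lift0 @: E0) :|: [set vedge j | j : 'I_m].
Definition Emj (j : 'I_m) : {set Edge} := [set e in Em | e.2 == j].
Definition ES (S : {set 'I_(n + m)}) : {set Edge} := [set e in Em | e.1 \in S].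

Definition fext (j : 'I_m) (F : {set Edge}) : R :=
  if vedge j \in F then f j (E0j j) else f j [set e | lift0 e \in F].

Definition fm (S : {set Edge}) : R := \sum_(j < m) fext j (S :&: Emj j).

Definition wsum (w : Edge -> R) (F : {set Edge}) : R := \sum_(e in F) w e.

(* the polymatroid P (vectors indexed by E, represented as functions on Edge
   vanishing off E) *)
Definition inP (w : Edge -> R) : Prop :=
  [/\ forall e, e \notin Em -> w e = 0,
      forall e, 0 <= w e &
      forall j (F : {set Edge}), F \subset Emj j -> wsum w F <= fext j F].

Definition vm (i : 'I_(n + m)) : R :=
  match split i with inl i' => v i' | inr j => rho j end.

Definition Hset (i : 'I_(n + m)) : {set 'I_(n + m)} :=
  [set k | (vm i < vm k) || ((vm k == vm i) && (k < i)%N)].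

(* the right-hand side of the recursive definition of x*_i; the budget term
   B_i/v_i is +oo for virtual buyers.  The inner minimum over H ⊆ H_i is taken
   with the (H = ∅)-term as neutral element, which does not change its value. *)
Definition xrhs (x : 'I_(n + m) -> R) (i : 'I_(n + m)) : R :=
  let t := \big[Num.min/fm (ES [set i])]_(H : {set 'I_(n + m)} | H \subset Hset i)
             (fm (ES (i |: H)) - \sum_(k in H) x k) in
  match split i with inl i' => Num.min (B i' / v i') t | inr _ => t end.

(* per-buyer liquid welfare term min(v_i t, B_i) (B_i = +oo for virtual) *)
Definition lwterm (i : 'I_(n + m)) (t : R) : R :=
  match split i with inl i' => Num.min (v i' * t) (B i') | inr j => rho j * t end.

Definition LW (w : Edge -> R) : R :=
  \sum_(i < n + m) lwterm i (wsum w (ES [set i])).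

End Market.

(* Main.v *)
Require Import Defs.
From HB Require Import structures.
From mathcomp Require Import all_boot all_order all_algebra.
From mathcomp Require Import ring lra zify.
Import Order.TTheory GRing.Theory Num.Theory.
Local Open Scope ring_scope.
Set Implicit Arguments. Unset Strict Implicit. Unset Printing Implicit Defensive.

Lemma min4 (R : realFieldType) (c p q r s : R) :
  c <= p + r -> c <= p + s -> c <= q + r -> c <= q + s ->
  c <= Num.min p q + Num.min r s.
Proof.
rewrite !minEle; case: ifP => _; case: ifP => _ //.
Qed.

Lemma minl (R : realFieldType) (p q : R) : Num.min p q <= p.
Proof. by rewrite ge_min lexx. Qed.
Lemma minr (R : realFieldType) (p q : R) : Num.min p q <= q.
Proof. by rewrite ge_min lexx orbT. Qed.

Lemma sum_mod (R : realFieldType) (I : finType) (x : I -> R) (A B : {set I}) :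
  \sum_(i in A :|: B) x i + \sum_(i in A :&: B) x i = \sum_(i in A) x i + \sum_(i in B) x i.
Proof.
rewrite (@big_setID _ _ _ _ (A :|: B) A) (@big_setID _ _ _ _ B A) /=.
have -> : (A :|: B) :&: A = A by apply/setP=> i; rewrite !inE; case: (i \in A); case: (i \in B).
have -> : (A :|: B) :\: A = B :\: A by apply/setP=> i; rewrite !inE; case: (i \in A); case: (i \in B).
rewrite setIC; lra.
Qed.

Lemma sum_add1 (R : realFieldType) (I : finType) (x : I -> R) (e : I) (S : {set I}) :
  e \notin S -> \sum_(i in e |: S) x i = x e + \sum_(i in S) x i.
Proof.
move=> eS; rewrite (big_setD1 e) ?setU11 //; congr (_ + _); apply: eq_bigl => i.
by rewrite !inE; case: (i =P e) => [->|_] //=; rewrite (negbTE eS).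
Qed.

Lemma le_bigmin_set (R : realFieldType) (I : finType) (c init : R) (P : pred {set I})
  (F : {set I} -> R) :
  P set0 -> init = F set0 -> (forall S, P S -> c <= F S) ->
  c <= \big[Num.min/init]_(S | P S) F S.
Proof. by move=> P0 -> h; apply: le_bigmin => //; apply: h. Qed.

Lemma sum2 (R : realFieldType) (I : finType) (k : nat) : forall (D : {set I})
  (g1 g2 : {set I} -> R) (x : I -> R),
  #|D| = k -> g1 set0 = 0 -> g2 set0 = 0 ->
  (forall A B : {set I}, A \subset B -> B \subset D -> g1 A <= g1 B) ->
  (forall A B : {set I}, A \subset B -> B \subset D -> g2 A <= g2 B) ->
  (forall A B : {set I}, A \subset D -> B \subset D -> g1 (A :|: B) + g1 (A :&: B) <= g1 A + g1 B) ->
  (forall A B : {set I}, A \subset D -> B \subset D -> g2 (A :|: B) + g2 (A :&: B) <= g2 A + g2 B) ->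
  (forall i, i \in D -> 0 <= x i) ->
  (forall S : {set I}, S \subset D -> \sum_(i in S) x i <= g1 S + g2 S) ->
  exists y1 y2 : I -> R,
    [/\ forall i, i \in D -> y1 i + y2 i = x i,
        forall i, i \in D -> 0 <= y1 i,
        forall i, i \in D -> 0 <= y2 i,
        forall S : {set I}, S \subset D -> \sum_(i in S) y1 i <= g1 S &
        forall S : {set I}, S \subset D -> \sum_(i in S) y2 i <= g2 S].
Proof.
elim: k => [|k IH] D g1 g2 x hD g10 g20 m1 m2 s1 s2 x0 hx.
  have D0 : D = set0 by apply/eqP; rewrite -cards_eq0 hD.
  exists (fun _ => 0), (fun _ => 0); split; try (by move=> i; rewrite D0 inE);
    move=> S; rewrite D0 subset0 => /eqP ->; by rewrite big_set0 ?g10 ?g20.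
have : (0 < #|D|)%N by rewrite hD.
case/card_gt0P => e eD.
set D' := D :\ e.
have hD' : #|D'| = k by move: hD; rewrite (cardsD1 e) eD add1n => -[].
have D'D : D' \subset D by apply: subsetDl.
have eD' : e \notin D' by rewrite !inE eqxx.
have sub' (S : {set I}) : S \subset D' -> S \subset D by move=> h; apply: (subset_trans h D'D).
have eS (S : {set I}) : S \subset D' -> e \notin S by move=> h; apply: contra eD' => /(subsetP h).
have eSD (S : {set I}) : S \subset D' -> e |: S \subset D.
  by move=> h; rewrite subUset sub1set eD (sub' _ h).
set t1 := fun S : {set I} => g1 (e |: S) + g2 S - \sum_(i in S) x i.
set t2 := fun S : {set I} => g2 (e |: S) + g1 S - \sum_(i in S) x i.
set al := \big[Num.min/g1 [set e]]_(S : {set I} | S \subset D') t1 S.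
set be := \big[Num.min/g2 [set e]]_(S : {set I} | S \subset D') t2 S.
have t10 : g1 [set e] = t1 set0 by rewrite /t1 setU0 g20 big_set0; lra.
have t20 : g2 [set e] = t2 set0 by rewrite /t2 setU0 g10 big_set0; lra.
have al_le (S : {set I}) : S \subset D' -> al <= t1 S by move=> h; apply: bigmin_le_cond.
have be_le (S : {set I}) : S \subset D' -> be <= t2 S by move=> h; apply: bigmin_le_cond.
have al_e : al <= g1 [set e] by rewrite t10; apply: al_le; apply: sub0set.
have be_e : be <= g2 [set e] by rewrite t20; apply: be_le; apply: sub0set.
have al0 : 0 <= al.
  apply: le_bigmin_set => //; first exact: sub0set.
  move=> S hS; rewrite /t1; have := hx S (sub' _ hS).
  have := m1 S (e |: S) (subsetUr _ _) (eSD _ hS); lra.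
have be0 : 0 <= be.
  apply: le_bigmin_set => //; first exact: sub0set.
  move=> S hS; rewrite /t2; have := hx S (sub' _ hS).
  have := m2 S (e |: S) (subsetUr _ _) (eSD _ hS); lra.
have key (S T : {set I}) : S \subset D' -> T \subset D' -> x e <= t1 S + t2 T.
  move=> hS hT; rewrite /t1 /t2.
  have U1 : (e |: S) :|: T = e |: (S :|: T) by rewrite setUA.
  have I1 : (e |: S) :&: T = S :&: T.
    apply/setP=> i; rewrite !inE; case: (i =P e) => [->|_] //=; by rewrite (negbTE (eS _ hT)) andbF.
  have U2 : S :|: (e |: T) = e |: (S :|: T) by rewrite setUCA.
  have I2 : S :&: (e |: T) = S :&: T.
    apply/setP=> i; rewrite !inE; case: (i =P e) => [->|_] //=; by rewrite (negbTE (eS _ hS)).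
  have hSD := sub' _ hS; have hTD := sub' _ hT.
  have hST : S :|: T \subset D' by rewrite subUset hS hT.
  have hIT : S :&: T \subset D by apply: subset_trans (subsetIl _ _) hSD.
  have := s1 _ _ (eSD _ hS) hTD; rewrite U1 I1 => h1.
  have := s2 _ _ hSD (eSD _ hT); rewrite U2 I2 => h2.
  have := hx _ (eSD _ hST); rewrite sum_add1; last exact: eS.
  have := hx _ hIT. have := sum_mod x S T. lra.
have albe : x e <= al + be.
  suff : x e - be <= al by lra.
  apply: le_bigmin_set => //; first exact: sub0set.
  move=> S hS; suff : x e - t1 S <= be by lra.
  apply: le_bigmin_set => //; first exact: sub0set.
  move=> T hT; have := key S T hS hT; lra.
set a := Num.min al (x e).
set b := x e - a.
have a_al : a <= al by apply: minl.
have a_xe : a <= x e by apply: minr.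
have a0 : 0 <= a by rewrite le_min al0 x0.
have b_be : b <= be.
  rewrite /b /a minEle; case: ifP => _; lra.
have b0 : 0 <= b by rewrite /b; lra.
set g1' := fun S => Num.min (g1 S) (g1 (e |: S) - a).
set g2' := fun S => Num.min (g2 S) (g2 (e |: S) - b).
have g1'0 : g1' set0 = 0.
  rewrite /g1' setU0 g10; apply/eqP; rewrite eq_le ge_min lexx /= le_min lexx /=; lra.
have g2'0 : g2' set0 = 0.
  rewrite /g2' setU0 g20; apply/eqP; rewrite eq_le ge_min lexx /= le_min lexx /=; lra.
have mono' (g : {set I} -> R) c :
    (forall A B : {set I}, A \subset B -> B \subset D -> g A <= g B) ->
    forall A B : {set I}, A \subset B -> B \subset D' ->
      Num.min (g A) (g (e |: A) - c) <= Num.min (g B) (g (e |: B) - c).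
  move=> mg A B hAB hB; rewrite le_min !ge_min.
  rewrite (mg A B hAB (sub' _ hB)) /=.
  have : g (e |: A) <= g (e |: B) by apply: mg; [exact: setUS | exact: eSD].
  move=> h; apply/orP; right; lra.
have sub'' (g : {set I} -> R) c :
    (forall A B : {set I}, A \subset D -> B \subset D -> g (A :|: B) + g (A :&: B) <= g A + g B) ->
    forall A B : {set I}, A \subset D' -> B \subset D' ->
      Num.min (g (A :|: B)) (g (e |: (A :|: B)) - c) +
      Num.min (g (A :&: B)) (g (e |: (A :&: B)) - c) <=
      Num.min (g A) (g (e |: A) - c) + Num.min (g B) (g (e |: B) - c).
  move=> sg A B hA hB.
  have hAD := sub' _ hA; have hBD := sub' _ hB.
  have m1a := minl (g (A :|: B)) (g (e |: (A :|: B)) - c).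
  have m1b := minr (g (A :|: B)) (g (e |: (A :|: B)) - c).
  have m2a := minl (g (A :&: B)) (g (e |: (A :&: B)) - c).
  have m2b := minr (g (A :&: B)) (g (e |: (A :&: B)) - c).
  apply: min4.
  - have := sg _ _ hAD hBD; lra.
  - have := sg _ _ hAD (eSD _ hB).
    have -> : A :|: (e |: B) = e |: (A :|: B) by rewrite setUCA.
    have -> : A :&: (e |: B) = A :&: B.
      apply/setP=> i; rewrite !inE; case: (i =P e) => [->|_] //=; by rewrite (negbTE (eS _ hA)).
    lra.
  - have := sg _ _ (eSD _ hA) hBD.
    have -> : (e |: A) :|: B = e |: (A :|: B) by rewrite setUA.
    have -> : (e |: A) :&: B = A :&: B.
      apply/setP=> i; rewrite !inE; case: (i =P e) => [->|_] //=; by rewrite (negbTE (eS _ hB)) andbF.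
    lra.
  - have := sg _ _ (eSD _ hA) (eSD _ hB).
    have -> : (e |: A) :|: (e |: B) = e |: (A :|: B).
      by apply/setP=> i; rewrite !inE; case: (i =P e).
    have -> : (e |: A) :&: (e |: B) = e |: (A :&: B).
      by apply/setP=> i; rewrite !inE; case: (i =P e).
    lra.
have hx' (S : {set I}) : S \subset D' -> \sum_(i in S) x i <= g1' S + g2' S.
  move=> hS; apply: min4.
  - exact: hx (sub' _ hS).
  - have := be_le _ hS; rewrite /t2; lra.
  - have := al_le _ hS; rewrite /t1; lra.
  - have := hx _ (eSD _ hS); rewrite sum_add1; last exact: eS.
    rewrite /b; lra.
have [y1 [y2 [hy hy1 hy2 b1 b2]]] := IH D' g1' g2' x hD' g1'0 g2'0
  (mono' g1 a m1) (mono' g2 b m2) (sub'' g1 a s1) (sub'' g2 b s2)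
  (fun i hi => x0 i (subsetP D'D i hi)) hx'.
exists (fun i => if i == e then a else y1 i), (fun i => if i == e then b else y2 i).
have inD' i : i \in D -> i != e -> i \in D' by move=> h1 h2; rewrite !inE h1 h2.
split.
- move=> i hi; case: (i =P e) => [->|/eqP ne]; first by rewrite /b; lra.
  exact: hy (inD' _ hi ne).
- by move=> i hi; case: (i =P e) => [_|/eqP ne] //; exact: hy1 (inD' _ hi ne).
- by move=> i hi; case: (i =P e) => [_|/eqP ne] //; exact: hy2 (inD' _ hi ne).
- move=> S hS; case eSb : (e \in S).
    have hS' : S :\ e \subset D' by rewrite /D' setSD.
    rewrite (big_setD1 e eSb) eqxx.
    rewrite (eq_bigr y1); last by move=> i; rewrite !inE => /andP [/negbTE -> _].
    have := b1 _ hS'; rewrite /g1' setD1K // => h.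
    have := minr (g1 (S :\ e)) (g1 S - a); move=> h2; rewrite /=; lra.
  have hS' : S \subset D' by rewrite subsetD1 hS eSb.
  rewrite (eq_bigr y1); last by move=> i iS; case: (i =P e) => // ei; rewrite -ei iS in eSb.
  apply: le_trans (b1 _ hS') _; exact: minl.
- move=> S hS; case eSb : (e \in S).
    have hS' : S :\ e \subset D' by rewrite /D' setSD.
    rewrite (big_setD1 e eSb) eqxx.
    rewrite (eq_bigr y2); last by move=> i; rewrite !inE => /andP [/negbTE -> _].
    have := b2 _ hS'; rewrite /g2' setD1K // => h.
    have := minr (g2 (S :\ e)) (g2 S - b); move=> h2; rewrite /=; lra.
  have hS' : S \subset D' by rewrite subsetD1 hS eSb.
  rewrite (eq_bigr y2); last by move=> i iS; case: (i =P e) => // ei; rewrite -ei iS in eSb.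
  apply: le_trans (b2 _ hS') _; exact: minl.
Qed.

Lemma sumN (R : realFieldType) (I J : finType) (gs : J -> {set I} -> R)
  (g0 : forall j, gs j set0 = 0)
  (gm : forall j (A B : {set I}), A \subset B -> gs j A <= gs j B)
  (gsub : forall j (A B : {set I}), gs j (A :|: B) + gs j (A :&: B) <= gs j A + gs j B)
  (r : seq J) : uniq r -> forall x : I -> R, (forall i, 0 <= x i) ->
  (forall S : {set I}, \sum_(i in S) x i <= \sum_(j <- r) gs j S) ->
  exists y : J -> I -> R,
    [/\ forall i, \sum_(j <- r) y j i = x i,
        forall j i, j \in r -> 0 <= y j i &
        forall j (S : {set I}), j \in r -> \sum_(i in S) y j i <= gs j S].
Proof.
elim: r => [|j r IH] /=.
  move=> _ x x0 hx; exists (fun _ _ => 0); split => //.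
  move=> i; rewrite big_nil; have := hx [set i]; rewrite big_set1 big_nil.
  have := x0 i; lra.
case/andP => jr ur x x0 hx.
set g2 := fun S => \sum_(j' <- r) gs j' S.
have [||||||||y1 [y2 [hy hy1 hy2 b1 b2]]] := @sum2 R I #|[set: I]| [set: I] (gs j) g2 x erefl.
- exact: g0.
- by rewrite /g2 big1.
- by move=> A B h _; apply: gm.
- by move=> A B h _; rewrite /g2; apply: ler_sum => j' _; apply: gm.
- by move=> A B _ _; apply: gsub.
- move=> A B _ _; rewrite /g2 -!big_split /=; apply: ler_sum => j' _; exact: gsub.
- by move=> i _; apply: x0.
- by move=> S _; have := hx S; rewrite big_cons.
have [||yr [hyr hyr0 hyrb]] := IH ur y2.
- by move=> i; apply: hy2.
- by move=> S; apply: b2; apply: subsetT.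
exists (fun j' => if j' == j then y1 else yr j'); split.
- move=> i; rewrite big_cons eqxx -(hy i (in_setT i)) -(hyr i); congr (_ + _).
  apply: eq_big_seq => j' j'r; case: (j' =P j) => // ej; by move: j'r; rewrite ej (negbTE jr).
- move=> j' i; rewrite inE; case: (j' =P j) => [-> _|_ /= h]; first exact: hy1.
  exact: hyr0.
- move=> j' S; rewrite inE; case: (j' =P j) => [-> _|_ /= h]; first by apply: b1; apply: subsetT.
  exact: hyrb.
Qed.

Lemma exists_max (I : finType) (Hs : I -> {set I})
  (irr : forall i, i \notin Hs i)
  (tr : forall i j k, j \in Hs i -> k \in Hs j -> k \in Hs i)
  (tot : forall i k, i != k -> k \in Hs i \/ i \in Hs k) (c : nat) :
  forall D : {set I}, #|D| = c.+1 ->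
  exists l, l \in D /\ forall k, k \in D -> k != l -> k \in Hs l.
Proof.
elim: c => [|c IH] D hD.
  have : (0 < #|D|)%N by rewrite hD.
  case/card_gt0P => a aD; exists a; split => // k kD ka.
  have := hD; rewrite (cardsD1 a) aD add1n => -[] /eqP; rewrite cards_eq0 => /eqP h.
  have : k \in D :\ a by rewrite !inE ka kD.
  by rewrite h inE.
have : (0 < #|D|)%N by rewrite hD.
case/card_gt0P => a aD.
have hD' : #|D :\ a| = c.+1 by move: hD; rewrite (cardsD1 a) aD add1n => -[].
have [l [lD hl]] := IH _ hD'.
have la : l != a by move: lD; rewrite !inE => /andP [].
have lD0 : l \in D by move: lD; rewrite !inE => /andP [].
case: (tot l a (la)) => h.
  exists l; split => // k kD kl; case: (k =P a) => [->//|/eqP ka].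
  by apply: hl => //; rewrite !inE ka kD.
exists a; split => // k kD ka; case: (k =P l) => [->//|/eqP kl].
by apply: (tr _ l) => //; apply: hl => //; rewrite !inE ka kD.
Qed.

Lemma abel (R : realFieldType) (I : finType) (Hs : I -> {set I})
  (irr : forall i, i \notin Hs i)
  (tr : forall i j k, j \in Hs i -> k \in Hs j -> k \in Hs i)
  (tot : forall i k, i != k -> k \in Hs i \/ i \in Hs k) (d : I -> R) (c : nat) :
  forall (D : {set I}) (u : I -> R), #|D| = c ->
  (forall i k, k \in Hs i -> u i <= u k) ->
  (forall i, i \in D -> 0 <= u i) ->
  (forall i, i \in D -> 0 <= \sum_(k in D :&: (i |: Hs i)) d k) ->
  0 <= \sum_(i in D) u i * d i.
Proof.
elim: c => [|c IH] D u hD um u0 hp.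
  have -> : D = set0 by apply/eqP; rewrite -cards_eq0 hD.
  by rewrite big_set0.
have [l [lD hl]] := exists_max irr tr tot hD.
have -> : \sum_(i in D) u i * d i =
   u l * \sum_(i in D) d i + \sum_(i in D :\ l) (u i - u l) * d i.
  have e1 : \sum_(i in D) (u i - u l) * d i = \sum_(i in D :\ l) (u i - u l) * d i.
    by rewrite (big_setD1 l) //= subrr mul0r add0r.
  rewrite -e1 mulr_sumr -big_split /=; apply: eq_bigr => i _; ring.
apply: addr_ge0.
  apply: mulr_ge0; first exact: u0.
  have := hp l lD; congr (0 <= _); apply: eq_bigl => k.
  rewrite !inE; case kD: (k \in D); rewrite ?andbF ?andbT //.
  case: (k =P l) => [->|/eqP kl] //=; by rewrite (hl k kD kl).
have hD' : #|D :\ l| = c by move: hD; rewrite (cardsD1 l) lD add1n => -[].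
apply: (IH (D :\ l) (fun i => u i - u l)) => //=.
- move=> i k h; have := um i k h; lra.
- move=> i; rewrite !inE => /andP [il iD]; have := um l i (hl i iD il); lra.
- move=> i; rewrite !inE => /andP [il iD]; have := hp i iD; congr (0 <= _).
  apply: eq_bigl => k; rewrite !inE; case: (k =P l) => [->|_] //=.
  rewrite lD eq_sym (negbTE il) /=; apply/negbTE/negP => li.
  by have := irr i; rewrite (tr _ _ _ li (hl i iD il)).
Qed.

Lemma tight_max (R : realFieldType) (I : finType) (Hs : I -> {set I})
  (g : {set I} -> R) (x : I -> R) (capped : I -> Prop)
  (gsub : forall A B : {set I}, g (A :|: B) + g (A :&: B) <= g A + g B)
  (xle : forall S : {set I}, \sum_(i in S) x i <= g S) (g0 : g set0 = 0)
  (st : forall k, capped k \/ exists H : {set I}, H \subset Hs k /\ \sum_(i in k |: H) x i = g (k |: H))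
  (Q : {set I}) (Qd : forall k, k \in Q -> Hs k \subset Q) :
  exists T : {set I}, [/\ T \subset Q, \sum_(i in T) x i = g T &
     forall k, k \in Q -> k \notin T -> capped k].
Proof.
have tU (A B : {set I}) : \sum_(i in A) x i = g A -> \sum_(i in B) x i = g B ->
    \sum_(i in A :|: B) x i = g (A :|: B).
  move=> hA hB; have := sum_mod x A B; have := gsub A B; have := xle (A :|: B);
  have := xle (A :&: B); lra.
pose P := fun T : {set I} => (T \subset Q) && (\sum_(i in T) x i == g T).
have P0 : P set0 by rewrite /P sub0set big_set0 g0 eqxx.
case: (arg_maxnP (fun T : {set I} => #|T|) P0) => T /andP [TQ /eqP Tt] Tmax.
exists T; split => // k kQ kT.
case: (st k) => // -[H [HS Ht]]; exfalso.
have hP : P (T :|: (k |: H)).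
  rewrite /P subUset TQ /= subUset sub1set kQ (subset_trans HS (Qd k kQ)) /=.
  by apply/eqP; apply: tU.
have := Tmax _ hP.
have : T \proper T :|: (k |: H).
  apply/properP; split; first exact: subsetUl.
  by exists k => //; rewrite !inE eqxx orbT.
move/proper_card; rewrite ltnNge => /negP; done.
Qed.

Lemma prefix_le (R : realFieldType) (I : finType) (g : {set I} -> R) (x x' : I -> R)
  (capped : I -> Prop) (Q T : {set I}) :
  T \subset Q -> \sum_(i in T) x i = g T -> (forall k, k \in Q -> k \notin T -> capped k) ->
  (forall S : {set I}, \sum_(i in S) x' i <= g S) ->
  (forall k, capped k -> x' k <= x k) ->
  \sum_(i in Q) x' i <= \sum_(i in Q) x i.
Proof.
move=> TQ Tt cap x'le cx.
rewrite (@big_setID _ _ _ _ Q T) (@big_setID _ _ _ _ Q T x) /=.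
have -> : Q :&: T = T by apply/setIidPr.
apply: lerD; first by rewrite Tt; apply: x'le.
apply: ler_sum => k; rewrite !inE => /andP [kT kQ]; exact: cx (cap k kQ kT).
Qed.

Lemma bigmin_att (R : realFieldType) (I : finType) (P : pred I) (F : I -> R) (x0 : R) :
  \big[Num.min/x0]_(i | P i) F i = x0 \/
  exists i, P i /\ \big[Num.min/x0]_(i | P i) F i = F i.
Proof.
apply: (big_ind (fun y => y = x0 \/ exists i, P i /\ y = F i)); first by left.
- by move=> a b ha hb; rewrite minEle; case: ifP.
- by move=> i Pi; right; exists i.
Qed.
Unset Implicit Arguments. Set Strict Implicit.

Theorem proposition2p1 (R : realFieldType) (n m : nat)
  (E0 : {set 'I_n * 'I_m}) (f : 'I_m -> {set 'I_n * 'I_m} -> R)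
  (v : 'I_n -> R) (B : 'I_n -> R) (rho : 'I_m -> R)
  (hv : forall i, 0 < v i) (hB : forall i, 0 <= B i) (hrho : forall j, 0 < rho j)
  (hf0 : forall j, f j set0 = 0)
  (hfpos : forall j (F : {set 'I_n * 'I_m}), F \subset E0j E0 j -> 0 <= f j F)
  (hfmono : forall j (F G : {set 'I_n * 'I_m}), F \subset G -> G \subset E0j E0 j -> f j F <= f j G)
  (hfsub : forall j (F G : {set 'I_n * 'I_m}), F \subset E0j E0 j -> G \subset E0j E0 j ->
      f j (F :|: G) + f j (F :&: G) <= f j F + f j G)
  (xs : 'I_(n + m) -> R)
  (hxs : forall i, xs i = xrhs E0 f v B rho xs i) :
  (exists ws : Edge n m -> R,
     [/\ inP E0 f ws,
         forall i, wsum ws (ES E0 [set i]) = xs i,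
         LW E0 v B rho ws = \sum_(i < n + m) lwterm v B rho i (xs i) &
         forall w, inP E0 f w -> LW E0 v B rho w <= \sum_(i < n + m) lwterm v B rho i (xs i)])
  /\ \sum_(i < n + m) xs i = fm E0 f (ES E0 setT).
Proof.
pose Hs := Hset v rho.
pose g := fun S : {set 'I_(n + m)} => fm E0 f (ES E0 S).
pose gs := fun j (S : {set 'I_(n + m)}) => fext E0 f j (ES E0 S :&: Emj E0 j).
have gE S : g S = \sum_(j < m) gs j S by [].
have HsE i k : (k \in Hs i) =
    (vm v rho i < vm v rho k) || ((vm v rho k == vm v rho i) && (k < i)%N).
  by rewrite /Hs /Hset inE.
have irr i : i \notin Hs i by rewrite HsE ltxx ltnn andbF.
have tr i j k : j \in Hs i -> k \in Hs j -> k \in Hs i.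
  rewrite !HsE => /orP [h1|/andP [/eqP e1 h1]] /orP [h2|/andP [/eqP e2 h2]].
  - by rewrite (lt_trans h1 h2).
  - by rewrite e2 h1.
  - by rewrite -e1 h2.
  - by rewrite e2 e1 eqxx (ltn_trans h2 h1) orbT.
have tot i k : i != k -> k \in Hs i \/ i \in Hs k.
  move=> ik; rewrite !HsE; case: (ltgtP (vm v rho i) (vm v rho k)) => h;
    [by left|by right|].
  rewrite /=; case: (ltngtP k i) => h'; [by left|by right|].
  by move: ik; rewrite (val_inj h') eqxx.
have um i k : k \in Hs i -> vm v rho i <= vm v rho k.
  by rewrite HsE => /orP [/ltW //| /andP [/eqP -> _]].
have vm0 i : 0 <= vm v rho i by rewrite /vm; case: (split i) => a; apply: ltW.
have pre_sub j (F : {set Edge n m}) : F \subset Emj E0 j ->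
    [set e | Defs.lift0 e \in F] \subset E0j E0 j.
  move=> hF; apply/subsetP => e; rewrite inE => /(subsetP hF).
  rewrite /Emj /Em /E0j !inE => /andP [/orP [/imsetP [e' e'E0 he]|/imsetP [j' _ he]] ej].
    move: he ej e'E0; rewrite /Defs.lift0; case: e => a b; case: e' => a' b' /=.
    by case=> /ord_inj -> -> ej ->; rewrite ej.
  move: he; rewrite /Defs.lift0 /vedge; case=> h _.
  by have := ltn_ord e.1; rewrite h; lia.
have fmono j (F G : {set Edge n m}) : F \subset G -> G \subset Emj E0 j ->
    fext E0 f j F <= fext E0 f j G.
  move=> FG GE; rewrite /fext.
  case vF: (vedge n j \in F); first by rewrite (subsetP FG _ vF) lexx.
  case vG: (vedge n j \in G).
    apply: (hfmono j _ (E0j E0 j)); [exact: pre_sub (subset_trans FG GE) | exact: subxx].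
  apply: hfmono (pre_sub _ _ GE); apply/subsetP => e; rewrite !inE; exact: (subsetP FG).
have fsub j (F G : {set Edge n m}) : F \subset Emj E0 j -> G \subset Emj E0 j ->
    fext E0 f j (F :|: G) + fext E0 f j (F :&: G) <= fext E0 f j F + fext E0 f j G.
  move=> hF hG; rewrite /fext !inE.
  have pF := pre_sub j F hF; have pG := pre_sub j G hG.
  case vF: (vedge n j \in F); case vG: (vedge n j \in G) => /=.
  - exact: lexx.
  - rewrite lerD2l; apply: hfmono pG; apply/subsetP => e; rewrite !inE => /andP [].
    by move=> _ ->.
  - rewrite addrC lerD2r; apply: hfmono pF; apply/subsetP => e; rewrite !inE => /andP [].
    by move=> ->.
  - have -> : [set e | Defs.lift0 e \in F :|: G] =
        [set e | Defs.lift0 e \in F] :|: [set e | Defs.lift0 e \in G].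
      by apply/setP => e; rewrite !inE.
    have -> : [set e | Defs.lift0 e \in F :&: G] =
        [set e | Defs.lift0 e \in F] :&: [set e | Defs.lift0 e \in G].
      by apply/setP => e; rewrite !inE.
    exact: hfsub.
have fext0 j : fext E0 f j set0 = 0.
  rewrite /fext inE.
  have -> : [set e | Defs.lift0 e \in (set0 : {set Edge n m})] = set0.
    by apply/setP => e; rewrite !inE.
  exact: hf0.
have gs0 j : gs j set0 = 0.
  rewrite /gs; have -> : ES E0 set0 :&: Emj E0 j = set0.
    by apply/setP => e; rewrite /ES /Emj !inE andbF.
  exact: fext0.
have gsm j (X Y : {set 'I_(n + m)}) : X \subset Y -> gs j X <= gs j Y.
  move=> AB; apply: fmono (subsetIr _ _); apply/subsetP => e.
  rewrite /ES /Emj !inE => /andP [/andP [eE eA] /andP [_ ej]].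
  by rewrite eE ej (subsetP AB _ eA).
have gss j (X Y : {set 'I_(n + m)}) : gs j (X :|: Y) + gs j (X :&: Y) <= gs j X + gs j Y.
  rewrite /gs.
  have -> : ES E0 (X :|: Y) :&: Emj E0 j = (ES E0 X :&: Emj E0 j) :|: (ES E0 Y :&: Emj E0 j).
    apply/setP => e; rewrite /ES /Emj; move: (Em E0) => EM; rewrite !inE.
    by case: (e \in EM); case: (e.1 \in X); case: (e.1 \in Y); case: (e.2 == j).
  have -> : ES E0 (X :&: Y) :&: Emj E0 j = (ES E0 X :&: Emj E0 j) :&: (ES E0 Y :&: Emj E0 j).
    apply/setP => e; rewrite /ES /Emj; move: (Em E0) => EM; rewrite !inE.
    by case: (e \in EM); case: (e.1 \in X); case: (e.1 \in Y); case: (e.2 == j).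
  by apply: fsub; apply: subsetIr.
have g0 : g set0 = 0 by rewrite gE big1.
have gm (X Y : {set 'I_(n + m)}) : X \subset Y -> g X <= g Y.
  by move=> h; rewrite !gE; apply: ler_sum => j _; apply: gsm.
have gsub (X Y : {set 'I_(n + m)}) : g (X :|: Y) + g (X :&: Y) <= g X + g Y.
  by rewrite !gE -!big_split; apply: ler_sum => j _; apply: gss.
pose term k (H : {set 'I_(n + m)}) := g (k |: H) - \sum_(l in H) xs l.
pose t k := \big[Num.min/g [set k]]_(H : {set 'I_(n + m)} | H \subset Hs k) term k H.
have xsE k : xs k = match split k with inl k' => Num.min (B k' / v k') (t k) | inr _ => t k end.
  by rewrite {1}hxs.
have xs_t k : xs k <= t k.
  by rewrite xsE; case: (split k) => [k'|j]; [exact: minr | exact: lexx].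
have xs_term k (H : {set 'I_(n + m)}) : H \subset Hs k -> xs k <= term k H.
  by move=> h; apply: le_trans (xs_t k) _; exact: bigmin_le_cond.
have xs_cap k k' : split k = inl k' -> xs k <= B k' / v k'.
  by move=> e; rewrite xsE e; exact: minl.
have xs_st k : (exists k', split k = inl k' /\ xs k = B k' / v k') \/
    exists H : {set 'I_(n + m)}, H \subset Hs k /\ xs k = term k H.
  have tt : exists H : {set 'I_(n + m)}, H \subset Hs k /\ t k = term k H.
    rewrite /t; case: (bigmin_att (fun H : {set 'I_(n + m)} => H \subset Hs k) (term k) (g [set k]))
      => [->|[H [hH ->]]]; last by exists H.
    by exists set0; rewrite sub0set /term setU0 big_set0 subr0.
  rewrite xsE; case e: (split k) => [k'|j]; last by right.
  rewrite minEle; case: ifP => _; [left; by exists k' | by right].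
have xle (S : {set 'I_(n + m)}) : \sum_(l in S) xs l <= g S.
  case c: #|S| => [|c'].
    by move: c => /eqP; rewrite cards_eq0 => /eqP ->; rewrite big_set0 g0.
  have [l [lS hl]] := exists_max irr tr tot c.
  rewrite (big_setD1 l lS) /=.
  have hH : S :\ l \subset Hs l.
    by apply/subsetP => k; rewrite in_setD1 => /andP [kl kS]; exact: hl kS kl.
  by have := xs_term l _ hH; rewrite /term setD1K //; lra.
have xs0 k : 0 <= xs k.
  have h : 0 <= t k.
    apply: le_bigmin; first by rewrite -g0; apply: gm; apply: sub0set.
    move=> H hH; rewrite /term; have := xle H; have := gm H (k |: H) (subsetUr _ _); lra.
  rewrite xsE; case: (split k) => [k'|j] //; rewrite le_min h andbT.
  exact: divr_ge0 (hB k') (ltW (hv k')).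
have [y [hy y0 yb]] := sumN gs0 gsm gss (index_enum_uniq 'I_m) xs0 xle.
have yz j i : (i, j) \notin Em E0 -> y j i = 0.
  move=> hij; have := yb j [set i] (mem_index_enum j); rewrite big_set1.
  have -> : gs j [set i] = 0.
    rewrite /gs; have -> : ES E0 [set i] :&: Emj E0 j = set0.
      apply/setP => e; rewrite /ES /Emj; move: (Em E0) hij => EM hij; rewrite !inE.
      case: e => a b /=; case: (a =P i) => [->|_]; case: (b =P j) => [->|_];
        by rewrite ?andbF ?(negbTE hij).
    exact: fext0.
  have := y0 j i (mem_index_enum j); lra.
pose ws (e : Edge n m) := if e \in Em E0 then y e.2 e.1 else 0.
have hws i : wsum ws (ES E0 [set i]) = xs i.
  rewrite /wsum (partition_big (fun e : Edge n m => e.2) xpredT) //=.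
  rewrite -(hy i); apply: eq_bigr => j _.
  case hij: ((i, j) \in Em E0).
    rewrite (eq_bigl (fun e => e == (i, j))); first by rewrite big_pred1_eq /ws hij.
    move=> e; rewrite /ES; move: (Em E0) hij => EM hij; rewrite !inE.
    case: e => a b /=; rewrite xpair_eqE.
    by case: (a =P i) => [->|_]; case: (b =P j) => [->|_]; rewrite ?hij ?andbF ?andbT.
  rewrite big_pred0 ?yz ?hij //.
  move=> e; rewrite /ES; move: (Em E0) hij => EM hij; rewrite !inE.
  case: e => a b /=.
  by case: (a =P i) => [->|_]; case: (b =P j) => [->|_]; rewrite ?hij ?andbF.
have vEm j : vedge n j \in Em E0.
  by rewrite /Em inE; apply/orP; right; apply/imsetP; exists j.
pose cap k := exists k', split k = inl k' /\ xs k = B k' / v k'.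
have st k : cap k \/ exists H : {set 'I_(n + m)}, H \subset Hs k /\
    \sum_(i in k |: H) xs i = g (k |: H).
  case: (xs_st k) => [h|[H [hH e]]]; first by left.
  right; exists H; split => //.
  rewrite sum_add1 ?e /term; first lra.
  by apply/negP => kH; have := irr k; rewrite (subsetP hH _ kH).
have sT (F : 'I_(n + m) -> R) : \sum_(i in [set: 'I_(n + m)]) F i = \sum_i F i.
  by apply: eq_bigl => i; rewrite in_setT.
split.
  exists ws; split.
  - split.
    + by move=> e he; rewrite /ws (negbTE he).
    + by move=> e; rewrite /ws; case: ifP => // _; exact: y0 _ _ (mem_index_enum _).
    + move=> j F hF; rewrite /wsum.
      have hF' e : e \in F -> e \in Em E0 /\ e.2 = j.
        by move/(subsetP hF); rewrite /Emj; move: (Em E0) => EM; rewrite !inE => /andP [-> /eqP ->].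
      rewrite (eq_bigr (fun e => y j e.1)); last first.
        by move=> e eF; have [eE e2] := hF' e eF; rewrite /ws eE e2.
      rewrite -(@big_imset _ _ _ _ _ (fun e : Edge n m => e.1) F (y j)) /=; last first.
        move=> e1 e2 h1 h2 /= eq; have [_ j1] := hF' _ h1; have [_ j2] := hF' _ h2.
        by move: eq j1 j2 {h1 h2}; case: e1 => a b; case: e2 => a' b' /= -> -> ->.
      apply: le_trans (yb j _ (mem_index_enum j)) _.
      rewrite /gs; have -> : ES E0 [set e.1 | e in F] :&: Emj E0 j = F; last exact: lexx.
      apply/setP => e; apply/idP/idP.
        rewrite /ES /Emj !in_setI !in_set.
        case/andP => /andP [eE /imsetP [e' e'F he]] /andP [_ ej].
        have [_ e'j] := hF' _ e'F.
        suff -> : e = e' by [].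
        by move: he ej e'j {eE e'F}; case: e => a b; case: e' => a' b' /= -> /eqP -> ->.
      move=> eF; have [eE ej] := hF' _ eF.
      rewrite /ES /Emj; move: (Em E0) eE => EM eE; rewrite !inE eE ej eqxx /=.
      by rewrite andbT; apply/imsetP; exists e.
  - exact: hws.
  - by rewrite /LW; apply: eq_bigr => i _; rewrite hws.
  - move=> w [w0 wpos wb].
    pose xw i := wsum w (ES E0 [set i]).
    have xwle (S : {set 'I_(n + m)}) : \sum_(i in S) xw i <= g S.
      have e1 : \sum_(i in S) xw i = wsum w (ES E0 S).
        rewrite /wsum (partition_big (fun e : Edge n m => e.1) (mem S)) /=; last first.
          by move=> e; rewrite /ES in_set => /andP [_ ->].
        apply: eq_bigr => i iS; rewrite /xw /wsum; apply: eq_bigl => e.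
        rewrite /ES; move: (Em E0) => EM; rewrite !inE.
        by case: (e.1 =P i) => [->|_]; rewrite ?iS ?andbF ?andbT.
      rewrite e1 gE /wsum (partition_big (fun e : Edge n m => e.2) xpredT) //=.
      apply: ler_sum => j _.
      have := wb j (ES E0 S :&: Emj E0 j) (subsetIr _ _); rewrite /wsum.
      apply: le_trans; rewrite le_eqVlt; apply/orP; left; apply/eqP; apply: eq_bigl => e.
      rewrite /ES /Emj; move: (Em E0) => EM; rewrite !inE.
      by case: (e \in EM); case: (e.1 \in S); case: (e.2 == j).
    pose x' k := match split k with inl k' => Num.min (xw k) (B k' / v k') | inr _ => xw k end.
    have x'le (S : {set 'I_(n + m)}) : \sum_(i in S) x' i <= g S.
      apply: le_trans (xwle S); apply: ler_sum => k _; rewrite /x'.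
      by case: (split k) => // k'; exact: minl.
    have cx k : cap k -> x' k <= xs k.
      by move=> [k' [e ->]]; rewrite /x' e; exact: minr.
    have pref i : 0 <= \sum_(k in [set: 'I_(n + m)] :&: (i |: Hs i)) (xs k - x' k).
      have Qd k : k \in i |: Hs i -> Hs k \subset i |: Hs i.
        rewrite in_setU1 => /orP [/eqP ->|ki]; first exact: subsetUr.
        by apply/subsetP => l lk; rewrite in_setU1 (tr _ _ _ ki lk) orbT.
      have [T [TQ Tt Tc]] := tight_max gsub xle g0 st Qd.
      have := prefix_le TQ Tt Tc x'le cx; rewrite setTI sumrB; lra.
    have ab := @abel R _ Hs irr tr tot (fun k => xs k - x' k) _ [set: 'I_(n + m)]
      (vm v rho) erefl um (fun i _ => vm0 i) (fun i _ => pref i).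
    have l1 i : lwterm v B rho i (xw i) = vm v rho i * x' i.
      rewrite /lwterm /vm /x'; case: (split i) => [k|j] //.
      have vk := hv k; set c := B k / v k.
      have Bc : B k = v k * c by rewrite /c mulrCA mulfV ?mulr1 // lt0r_neq0.
      by rewrite Bc !minEle ler_pM2l //; case: ifP.
    have l2 i : lwterm v B rho i (xs i) = vm v rho i * xs i.
      rewrite /lwterm /vm; case e: (split i) => [k|j] //.
      have h := xs_cap i k e; apply/min_idPl.
      rewrite -(ler_pM2l (hv k)) mulrCA mulfV ?mulr1 in h => //; exact: lt0r_neq0.
    have -> : LW E0 v B rho w = \sum_i vm v rho i * x' i.
      by apply: eq_bigr => i _; exact: l1 i.
    have -> : \sum_(i < n + m) lwterm v B rho i (xs i) = \sum_i vm v rho i * xs i.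
      by apply: eq_bigr => i _; exact: l2 i.
    have : \sum_(i in [set: 'I_(n + m)]) vm v rho i * (xs i - x' i) =
        \sum_i vm v rho i * xs i - \sum_i vm v rho i * x' i.
      by rewrite sT -sumrB; apply: eq_bigr => i _; rewrite mulrBr.
    move=> hab; move: ab; rewrite hab; lra.
have [T [_ Tt Tc]] := tight_max gsub xle g0 st (Q := setT) (fun k _ => subsetT _).
have vT j : rshift n j \in T.
  apply/negPn/negP => h; have [k' [e _]] := Tc _ (in_setT _) h.
  by have sr : split (rshift n j) = inr j := unsplitK (inr j : 'I_n + 'I_m); rewrite sr in e.
have gT : g T = g setT.
  rewrite !gE; apply: eq_bigr => j _; rewrite /gs /fext.
  have vin (S : {set 'I_(n + m)}) : rshift n j \in S -> vedge n j \in ES E0 S :&: Emj E0 j.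
    by move=> h; rewrite /ES /Emj; move: (Em E0) (vEm j) => EM vE; rewrite !inE /= h eqxx vE.
  by rewrite !vin ?in_setT ?vT.
apply/eqP; rewrite eq_le; apply/andP; split.
  by have := xle setT; rewrite sT.
rewrite -/(g setT) -gT -Tt -sT (@big_setID _ _ _ _ setT T) /= setTI lerDl.
by apply: sumr_ge0 => i _; exact: xs0.
Qed.
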